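(* The twisted torus $L_\gamma$ is a product torus $S^1(r_1)\times S^1(r_2)\subset\mathbb{C}^2$ if and only if $\rho|H|=2$ identically on the torus.
   Context: Let $\gamma:\mathbb{R}/2\pi\mathbb{Z}\to\mathbb{C}\setminus\{0\}$ be a smooth regular simple closed curve written as $\gamma(\beta)=\rho(\beta)e^{if(\beta)}$ with $\rho>0$ smooth and $2\pi$-periodic and $f$ smooth with $f(\beta+2\pi)=f(\beta)+2k\pi$, $k\in\mathbb{Z}$. The twisted torus $L_\gamma$ is the image of $F(\alpha,\beta)=\frac{\rho(\beta)}{\sqrt2}\left(e^{i(f(\beta)+\alpha)},e^{i(f(\beta)-\alpha)}\right)$, $\alpha,\beta\in[0,2\pi)$, in $\mathbb{C}^2$ with the Euclidean metric. $H$ is its mean curvature vector ($g$-trace of the second fundamental form, no normalizing factor, $g$ the induced metric), and $\rho$ is regarded as the function $(\alpha,\beta)\mapsto\rho(\beta)$. For $r>0$, $S^1(r)=\{z\in\mathbb{C}:|z|=r\}$. *)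

(* Defs.v *)
From Stdlib Require Import Reals ZArith.
From Coquelicot Require Import Coquelicot.
Open Scope R_scope.

Definition smooth (h : R -> R) : Prop :=
  forall (n : nat) (x : R), ex_derive (Derive_n h n) x.

Definition gamma (rho f : R -> R) (b : R) : C :=
  (rho b * cos (f b), rho b * sin (f b)).

Definition regular_curve (rho f : R -> R) : Prop :=
  forall b, Derive (fun t => fst (gamma rho f t)) b <> 0 \/
            Derive (fun t => snd (gamma rho f t)) b <> 0.

Definition simple_curve (rho f : R -> R) : Prop :=
  forall b1 b2, 0 <= b1 < 2 * PI -> 0 <= b2 < 2 * PI ->
    gamma rho f b1 = gamma rho f b2 -> b1 = b2.

(** The parametrisation F(alpha,beta) = rho(beta)/sqrt 2 (e^{i(f+alpha)}, e^{i(f-alpha)})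
    in C^2 = C * C. *)
Definition Fpt (rho f : R -> R) (a b : R) : C * C :=
  ((rho b / sqrt 2 * cos (f b + a), rho b / sqrt 2 * sin (f b + a)),
   (rho b / sqrt 2 * cos (f b - a), rho b / sqrt 2 * sin (f b - a))).

Definition L_gamma (rho f : R -> R) (p : C * C) : Prop :=
  exists a b, 0 <= a < 2 * PI /\ 0 <= b < 2 * PI /\ p = Fpt rho f a b.

Definition S1 (r : R) (z : C) : Prop := Cmod z = r.
Definition product_torus (r1 r2 : R) (p : C * C) : Prop :=
  S1 r1 (fst p) /\ S1 r2 (snd p).

(** Real coordinates of C^2 = R^4 (Re z, Im z, Re w, Im w); vectors in R^4 are
    represented as functions nat -> R, only indices 0..3 being used. *)
Definition V4 := nat -> R.
Definition coord (p : C * C) (k : nat) : R :=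
  match k with
  | 0%nat => fst (fst p) | 1%nat => snd (fst p)
  | 2%nat => fst (snd p) | 3%nat => snd (snd p)
  | _ => 0 end.
Definition dot (u v : V4) : R :=
  u 0%nat * v 0%nat + u 1%nat * v 1%nat + u 2%nat * v 2%nat + u 3%nat * v 3%nat.

Section Geometry.
Variables (rho f : R -> R).

Definition Fc (a b : R) (k : nat) : R := coord (Fpt rho f a b) k.

Definition F_a (a b : R) : V4 := fun k => Derive (fun a' => Fc a' b k) a.
Definition F_b (a b : R) : V4 := fun k => Derive (fun b' => Fc a b' k) b.
Definition F_aa (a b : R) : V4 :=
  fun k => Derive (fun a' => Derive (fun a'' => Fc a'' b k) a') a.
Definition F_ab (a b : R) : V4 :=
  fun k => Derive (fun b' => Derive (fun a' => Fc a' b' k) a) b.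
Definition F_bb (a b : R) : V4 :=
  fun k => Derive (fun b' => Derive (fun b'' => Fc a b'' k) b') b.

Definition g11 a b := dot (F_a a b) (F_a a b).
Definition g12 a b := dot (F_a a b) (F_b a b).
Definition g22 a b := dot (F_b a b) (F_b a b).
Definition gdet a b := g11 a b * g22 a b - g12 a b ^ 2.
Definition gi11 a b := g22 a b / gdet a b.
Definition gi12 a b := - g12 a b / gdet a b.
Definition gi22 a b := g11 a b / gdet a b.

Definition nproj (a b : R) (v : V4) : V4 :=
  let c1 := gi11 a b * dot v (F_a a b) + gi12 a b * dot v (F_b a b) in
  let c2 := gi12 a b * dot v (F_a a b) + gi22 a b * dot v (F_b a b) in
  fun k => v k - (c1 * F_a a b k + c2 * F_b a b k).

(** Second fundamental form II(d_i, d_j) = (d_i d_j F)^perp, and the mean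
    curvature vector H = g^{ij} II_ij (trace, no normalising factor). *)
Definition meanH (a b : R) : V4 :=
  fun k => gi11 a b * nproj a b (F_aa a b) k
           + 2 * gi12 a b * nproj a b (F_ab a b) k
           + gi22 a b * nproj a b (F_bb a b) k.

Definition normH (a b : R) : R := sqrt (dot (meanH a b) (meanH a b)).

End Geometry.

(* Main.v *)
Require Import Defs.
From Stdlib Require Import Reals ZArith Lra Lia Classical FunctionalExtensionality.
From Coquelicot Require Import Coquelicot.
Open Scope R_scope.

Definition combt (t c1 s1 c2 s2 x1 x2 x3 x4 : R) : V4 := fun k =>
  match k with
  | 0%nat => (x1 * c1 - x2 * s1 + x3 * c1 - x4 * s1) / t
  | 1%nat => (x1 * s1 + x2 * c1 + x3 * s1 + x4 * c1) / t
  | 2%nat => (x1 * c2 - x2 * s2 - x3 * c2 + x4 * s2) / t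
  | 3%nat => (x1 * s2 + x2 * c2 - x3 * s2 - x4 * c2) / t
  | _ => 0 end.

Lemma dot_combt t c1 s1 c2 s2 x1 x2 x3 x4 y1 y2 y3 y4 :
  t * t = 2 -> c1 ^ 2 + s1 ^ 2 = 1 -> c2 ^ 2 + s2 ^ 2 = 1 ->
  dot (combt t c1 s1 c2 s2 x1 x2 x3 x4) (combt t c1 s1 c2 s2 y1 y2 y3 y4)
  = x1 * y1 + x2 * y2 + x3 * y3 + x4 * y4.
Proof.
  intros Ht H1 H2. unfold dot, combt.
  assert (t <> 0) by (intro; subst; lra).
  transitivity ((x1*y1+x2*y2+x3*y3+x4*y4) * ((c1^2+s1^2) + (c2^2+s2^2)) / (t*t)
    + (x1*y3+x3*y1+x2*y4+x4*y2) * ((c1^2+s1^2) - (c2^2+s2^2)) / (t*t)).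
  field; auto.
  rewrite Ht, H1, H2. field.
Qed.

Lemma combt_lin t c1 s1 c2 s2 x1 x2 x3 x4 al y1 y2 y3 y4 :
  (fun k => combt t c1 s1 c2 s2 x1 x2 x3 x4 k - al * combt t c1 s1 c2 s2 y1 y2 y3 y4 k)
  = combt t c1 s1 c2 s2 (x1 - al*y1) (x2 - al*y2) (x3 - al*y3) (x4 - al*y4).
Proof.
  apply functional_extensionality; intros [|[|[|[|k]]]]; unfold combt.
  4: idtac.
  all: simpl; unfold Rdiv; ring.
Qed.

Ltac fixeta := repeat match goal with
  | |- context [Derive (fun x : R => ?g x)] => change (Derive (fun x : R => g x)) with (Derive g)
  end.
Section D.
Variables rho f : R -> R.
Hypothesis Hr1 : forall x, ex_derive rho x.
Hypothesis Hr2 : forall x, ex_derive (Derive rho) x.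
Hypothesis Hf1 : forall x, ex_derive f x.
Hypothesis Hf2 : forall x, ex_derive (Derive f) x.

Notation CB a b := (combt (sqrt 2) (cos (f b + a)) (sin (f b + a)) (cos (f b - a)) (sin (f b - a))).

Lemma F_a_eq a b : F_a rho f a b = CB a b 0 0 0 (rho b).
Proof.
  apply functional_extensionality; intros [|[|[|[|k]]]];
  unfold F_a, Fc, Fpt, coord, combt; simpl; apply is_derive_unique;
  idtac. all: try (auto_derive; [auto|]). all: unfold Rminus, Rdiv; fixeta; ring.
Qed.

Lemma F_b_eq a b : F_b rho f a b = CB a b (Derive rho b) (rho b * Derive f b) 0 0.
Proof.
  apply functional_extensionality; intros [|[|[|[|k]]]];
  unfold F_b, Fc, Fpt, coord, combt; simpl; apply is_derive_unique.
  all: try (auto_derive; [repeat split; auto|]). all: unfold Rminus, Rdiv; fixeta; ring.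
Qed.

Lemma F_aa_eq a b : F_aa rho f a b = CB a b (- rho b) 0 0 0.
Proof.
  apply functional_extensionality; intro k. unfold F_aa.
  rewrite (Derive_ext _ (fun a' => CB a' b 0 0 0 (rho b) k)).
  2:{ intro t. change (F_a rho f t b k = CB t b 0 0 0 (rho b) k). now rewrite F_a_eq. }
  destruct k as [|[|[|[|k]]]]; unfold combt; simpl; apply is_derive_unique.
  all: try (auto_derive; [repeat split; auto|]). all: unfold Rminus, Rdiv; fixeta; ring.
Qed.

Lemma F_ab_eq a b : F_ab rho f a b = CB a b 0 0 (- (rho b * Derive f b)) (Derive rho b).
Proof.
  apply functional_extensionality; intro k. unfold F_ab.
  rewrite (Derive_ext _ (fun b' => CB a b' 0 0 0 (rho b') k)).
  2:{ intro t. change (F_a rho f a t k = CB a t 0 0 0 (rho t) k). now rewrite F_a_eq. }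
  destruct k as [|[|[|[|k]]]]; unfold combt; simpl; apply is_derive_unique.
  all: try (auto_derive; [repeat split; auto|]). all: unfold Rminus, Rdiv; fixeta; ring.
Qed.

Lemma F_bb_eq a b : F_bb rho f a b =
  CB a b (Derive (Derive rho) b - rho b * Derive f b ^ 2)
         (2 * Derive rho b * Derive f b + rho b * Derive (Derive f) b) 0 0.
Proof.
  apply functional_extensionality; intro k. unfold F_bb.
  rewrite (Derive_ext _ (fun b' => CB a b' (Derive rho b') (rho b' * Derive f b') 0 0 k)).
  2:{ intro t. change (F_b rho f a t k = CB a t (Derive rho t) (rho t * Derive f t) 0 0 k). now rewrite F_b_eq. }
  destruct k as [|[|[|[|k]]]]; unfold combt; simpl; apply is_derive_unique.
  all: try (auto_derive; [repeat split; auto|]). all: unfold Rminus, Rdiv; fixeta; ring.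
Qed.
End D.

Section M.
Variables rho f : R -> R.
Hypothesis Hr1 : forall x, ex_derive rho x.
Hypothesis Hr2 : forall x, ex_derive (Derive rho) x.
Hypothesis Hf1 : forall x, ex_derive f x.
Hypothesis Hf2 : forall x, ex_derive (Derive f) x.

Lemma meanH_eq a b (r p q w z : R) :
  r = rho b -> p = Derive rho b -> q = Derive (Derive rho) b ->
  w = Derive f b -> z = Derive (Derive f) b -> r <> 0 -> p^2 + r^2 * w^2 <> 0 ->
  let SS := p^2 + r^2*w^2 in
  let NN := 2*r^2*w^3 + 3*p^2*w - r*q*w + r*p*z in
  meanH rho f a b = combt (sqrt 2) (cos (f b + a)) (sin (f b + a)) (cos (f b - a)) (sin (f b - a))
     (- r * w * NN / SS^2) (p * NN / SS^2) 0 0.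
Proof.
  intros Er Ep Eq Ew Ez Hr HS SS NN.
  assert (Ht : sqrt 2 * sqrt 2 = 2) by (apply sqrt_sqrt; lra).
  assert (H1 : cos (f b + a) ^ 2 + sin (f b + a) ^ 2 = 1) by (pose proof (sin2_cos2 (f b + a)) as E; unfold Rsqr in E; nra).
  assert (H2 : cos (f b - a) ^ 2 + sin (f b - a) ^ 2 = 1) by (pose proof (sin2_cos2 (f b - a)) as E; unfold Rsqr in E; nra).
  unfold meanH, nproj, gi11, gi12, gi22, gdet, g11, g12, g22.
  rewrite (F_a_eq rho f), (F_b_eq rho f Hr1 Hf1), (F_aa_eq rho f), (F_ab_eq rho f Hr1 Hf1),
    (F_bb_eq rho f Hr1 Hr2 Hf1 Hf2).
  rewrite !(dot_combt _ _ _ _ _ _ _ _ _ _ _ _ _ Ht H1 H2).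
  rewrite <- Er, <- Ep, <- Eq, <- Ew, <- Ez.
  apply functional_extensionality; intros [|[|[|[|k]]]]; unfold combt; simpl.
  all: unfold SS, NN; field; repeat split; auto. all: try (intro E; apply HS; rewrite <- E; ring). all: intro E; rewrite E in Ht; lra.
Qed.
End M.

Lemma cont_eps (g : R -> R) x : continuous g x ->
  forall eps, 0 < eps -> exists d, 0 < d /\ forall y, Rabs (y - x) < d -> Rabs (g y - g x) < eps.
Proof.
  intros Hc eps He.
  destruct (proj1 (filterlim_locally g (g x)) Hc (mkposreal eps He)) as [d Hd].
  exists (pos d). split. apply cond_pos.
  intros y Hy. exact (Hd y Hy).
Qed.
Lemma exd_cont (g : R -> R) x : ex_derive g x -> continuous g x.
Proof. intro H. apply continuity_pt_filterlim. apply derivable_continuous_pt.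
 apply ex_derive_Reals_0. exact H. Qed.

Lemma alg (u v u' v' s : R) : s * s = u ^ 2 + v ^ 2 -> 0 < s -> s - v <> 0 ->
  2 * v * s ^ 2 + (u * v' - u' * v) = 2 * s ^ 3 ->
  - (1 * u') * / (s + - v) + - u * (- ((1 * u' * ((1 + 1) * (u * 1)) + 1 * v' * ((1 + 1) * (v * 1))) * / (2 * s) + - (1 * v')) * / ((s + - v) * (s + - v))) = -2 * s.
Proof.
  intros Hs Hs0 HD C.
    assert (K : - u' * (s - v) * s + u * (u * u' + v * v') - u * v' * s = - 2 * s^2 * (s - v)^2).
    { assert (E1 : u ^ 2 - (s * s - v ^ 2) = 0) by lra.
      assert (E2 : (u * v' - u' * v) - 2 * s ^ 2 * (s - v) = 0) by lra.
      apply Rminus_diag_uniq.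
      transitivity (u' * (u ^ 2 - (s * s - v ^ 2)) - (s - v) * ((u * v' - u' * v) - 2 * s ^ 2 * (s - v))).
      ring. rewrite E1, E2. ring. }
    assert (s <> 0) by lra. assert (s + - v <> 0) by exact HD.
    transitivity ((- u' * (s - v) * s + u * (u * u' + v * v') - u * v' * s) / (s * (s - v) ^ 2)).
    field. split; auto.
    rewrite K. field. auto.
Qed.

Section Core.
Variables U V U' V' : R -> R.
Hypothesis HU : forall x, is_derive U x (U' x).
Hypothesis HV : forall x, is_derive V x (V' x).
Hypothesis Hpos : forall x, 0 < U x ^ 2 + V x ^ 2.
Hypothesis Hcond : forall x, 2 * V x * sqrt (U x ^ 2 + V x ^ 2) ^ 2 + (U x * V' x - U' x * V x)
   = 2 * sqrt (U x ^ 2 + V x ^ 2) ^ 3.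

Definition sg x := sqrt (U x ^ 2 + V x ^ 2).
Definition DD x := sg x - V x.
Definition XX x := - U x / DD x.

Lemma X_der x : DD x <> 0 -> is_derive XX x (- 2 * sg x).
Proof.
  intro HD. unfold XX, DD, sg in *.
  auto_derive.
  - repeat split. exists (U' x); exact (HU x). exists (U' x); exact (HU x). exists (V' x); exact (HV x).
    replace (U x * (U x * 1) + V x * (V x * 1)) with (U x ^ 2 + V x ^ 2) by ring; apply Hpos.
    exists (V' x); exact (HV x).
    replace (U x * (U x * 1) + V x * (V x * 1)) with (U x ^ 2 + V x ^ 2) by ring; exact HD.
  - replace (U x * (U x * 1) + V x * (V x * 1)) with (U x ^ 2 + V x ^ 2) by ring.
    change (Derive (fun x0 : R => U x0) x) with (Derive U x).
    change (Derive (fun x0 : R => V x0) x) with (Derive V x).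
    rewrite (is_derive_unique _ _ _ (HU x)), (is_derive_unique _ _ _ (HV x)).
    pose proof (Hcond x) as C. pose proof (Hpos x) as P.
    apply alg; auto. apply sqrt_sqrt; lra. apply sqrt_lt_R0; auto.
Qed.

Lemma sg_sq x : sg x * sg x = U x ^ 2 + V x ^ 2.
Proof. unfold sg. apply sqrt_sqrt. pose proof (Hpos x). lra. Qed.
Lemma sg_pos x : 0 < sg x.
Proof. unfold sg. apply sqrt_lt_R0. auto. Qed.
Lemma DD_ge x : 0 <= DD x.
Proof. unfold DD. pose proof (sg_sq x). pose proof (sg_pos x). nra. Qed.
Lemma DD_pos x : U x <> 0 -> 0 < DD x.
Proof. intro H. unfold DD. pose proof (sg_sq x). pose proof (sg_pos x).
  assert (0 < U x * U x) by (destruct (Rlt_or_le 0 (U x)); [nra| assert (U x < 0) by lra; nra]).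
  destruct (Rlt_or_le (V x) 0); [lra|].
  assert (V x * V x < sg x * sg x) by lra. nra. Qed.
Lemma XX_id x : DD x <> 0 -> XX x ^ 2 * DD x = sg x + V x.
Proof. intro H. unfold XX. pose proof (sg_sq x). unfold DD in *.
  apply (Rmult_eq_reg_r (sg x - V x)); auto. field_simplify; auto. nra. Qed.

Lemma sg_der x : ex_derive sg x.
Proof. unfold sg. auto_derive. repeat split. exists (U' x); exact (HU x). exists (V' x); exact (HV x).
  replace (U x * (U x * 1) + V x * (V x * 1)) with (U x ^ 2 + V x ^ 2) by ring. apply Hpos. Qed.
Lemma sg_cont x : continuous sg x.
Proof. apply exd_cont, sg_der. Qed.
Lemma V_cont x : continuous V x.
Proof. apply exd_cont. exists (V' x); exact (HV x). Qed.
Lemma DD_der x : ex_derive DD x.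
Proof. unfold DD. auto_derive. split. apply sg_der. split. exists (V' x); exact (HV x). exact I. Qed.
Lemma DD_cont x : continuous DD x.
Proof. apply exd_cont. unfold DD. auto_derive. split. apply sg_der. split. exists (V' x); exact (HV x). exact I. Qed.
Lemma XX_cont x : DD x <> 0 -> continuous XX x.
Proof. intro H. apply exd_cont. exists (- 2 * sg x). apply X_der; exact H. Qed.

Lemma cpt (g : R -> R) x : continuous g x -> continuity_pt g x.
Proof. intro H. apply continuity_pt_filterlim. exact H. Qed.

Theorem core_zero : (forall x, U (x + 2*PI) = U x) -> (forall x, V (x + 2*PI) = V x) ->
  forall x, U x = 0.
Proof.
  intros PU PV x0. destruct (Req_dec (U x0) 0) as [|Hne]; [assumption|]. exfalso.
  assert (HD0 : 0 < DD x0) by (apply DD_pos; exact Hne).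
  assert (XXp : forall y, XX (y + 2*PI) = XX y) by (intro y; unfold XX, DD, sg; rewrite PU, PV; reflexivity).
  assert (HT : 0 < 2 * PI) by (pose proof PI_RGT_0; lra).
  set (T := 2 * PI) in *.
  destruct (classic (exists y, x0 - T <= y <= x0 /\ DD y = 0)) as [Hex | Hnex].
  2:{
    assert (Hn : forall y, x0 - T <= y <= x0 -> DD y <> 0)
      by (intros y Hy Hy0; apply Hnex; exists y; split; assumption).
    destruct (MVT_gen XX (x0 - T) x0 (fun y => - 2 * sg y)) as [c [Hc Hm]].
    - intros y Hy. rewrite Rmin_left in Hy by lra. rewrite Rmax_right in Hy by lra.
      apply X_der. apply Hn. lra.
    - intros y Hy. rewrite Rmin_left in Hy by lra. rewrite Rmax_right in Hy by lra.
      apply cpt, XX_cont, Hn. lra.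
    - pose proof (XXp (x0 - T)) as E. replace (x0 - T + T) with x0 in E by ring.
      rewrite E in Hm. pose proof (sg_pos c). nra. }
  set (E := fun y => x0 - T <= y <= x0 /\ DD y = 0).
  assert (Eb : bound E) by (exists x0; intros y [Hy _]; lra).
  destruct (completeness E Eb Hex) as [b1 [Hub Hlub]].
  assert (b1x0 : b1 <= x0) by (apply Hlub; intros y [Hy _]; lra).
  assert (b1ge : x0 - T <= b1) by (destruct Hex as [y0 Hy0]; pose proof (Hub y0 Hy0); unfold E in Hy0; lra).
  assert (Db1 : DD b1 = 0).
  { destruct (DD_ge b1) as [Hp|]; [|auto]. exfalso.
    destruct (cont_eps DD b1 (DD_cont b1) (DD b1) Hp) as [d [Hd Hdd]].
    assert (Hu : is_upper_bound E (b1 - d/2)).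
    { intros y Hy. destruct (Rle_or_lt y (b1 - d/2)) as [|Hlt]; [assumption|].
      pose proof (Hub y Hy) as Hyb. destruct Hy as [_ Hy0].
      assert (Rabs (y - b1) < d) by (rewrite Rabs_left1 by lra; lra).
      pose proof (Hdd y H) as K. rewrite Hy0 in K. rewrite Rabs_left1 in K by lra. lra. }
    pose proof (Hlub _ Hu). lra. }
  assert (b1lt : b1 < x0) by (destruct (Req_dec b1 x0); [subst; lra| lra]).
  assert (Hpos' : forall y, b1 < y <= x0 -> 0 < DD y).
  { intros y Hy. destruct (DD_ge y) as [|H0]; [assumption|]. exfalso.
    assert (E y) by (split; [lra| auto]). pose proof (Hub y H). lra. }
  destruct (continuity_ab_maj sg b1 x0) as [Mx [HM HMx]]; [lra| intros; apply cpt, sg_cont|].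
  pose (Mb := sg Mx).
  set (B := Rabs (XX x0) + 2 * Mb * (x0 - b1)).
  assert (HB : forall y, b1 < y < x0 -> Rabs (XX y) <= B).
  { intros y Hy.
    destruct (MVT_gen XX y x0 (fun y => - 2 * sg y)) as [c [Hc Hm]].
    - intros z Hz. rewrite Rmin_left in Hz by lra. rewrite Rmax_right in Hz by lra.
      apply X_der. apply Rgt_not_eq, Hpos'. lra.
    - intros z Hz. rewrite Rmin_left in Hz by lra. rewrite Rmax_right in Hz by lra.
      apply cpt, XX_cont, Rgt_not_eq, Hpos'. lra.
    - rewrite Rmin_left in Hc by lra. rewrite Rmax_right in Hc by lra.
      assert (Hsc : 0 < sg c <= Mb) by (split; [apply sg_pos| apply HM; lra]).
      assert (Ha : 0 <= sg c * (x0 - y) <= Mb * (x0 - b1)) by (split; nra).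
      replace (XX y) with (XX x0 + 2 * (sg c * (x0 - y))) by lra.
      eapply Rle_trans; [apply Rabs_triang|]. rewrite (Rabs_pos_eq (2 * _)) by lra.
      unfold B. lra. }
  assert (HB0 : 0 <= B) by (unfold B; pose proof (Rabs_pos (XX x0)); pose proof (sg_pos Mx); unfold Mb; nra).
  set (g := fun y => sg y + V y - B^2 * DD y).
  assert (Hg : forall y, b1 < y < x0 -> g y <= 0).
  { intros y Hy. unfold g. assert (HDy : 0 < DD y) by (apply Hpos'; lra).
    rewrite <- (XX_id y) by lra. pose proof (HB y Hy) as Hb.
    assert (XX y ^ 2 <= B ^ 2).
    { rewrite <- (pow2_abs (XX y)). pose proof (Rabs_pos (XX y)). nra. }
    nra. }
  assert (Hgb : 0 < g b1).
  { unfold g. rewrite Db1. unfold DD in Db1. pose proof (sg_pos b1). lra. }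
  assert (Hgc : continuous g b1).
  { apply exd_cont. unfold g. auto_derive. split. apply sg_der. split. exists (V' b1); exact (HV b1).
    split. apply DD_der. exact I. }
  destruct (cont_eps g b1 Hgc (g b1) Hgb) as [d [Hd Hdd]].
  set (y := b1 + Rmin (d/2) ((x0 - b1)/2)).
  assert (Hy1 : 0 < Rmin (d/2) ((x0 - b1)/2)) by (apply Rmin_glb_lt; lra).
  assert (Hy2 : Rmin (d/2) ((x0 - b1)/2) <= d/2) by apply Rmin_l.
  assert (Hy3 : Rmin (d/2) ((x0 - b1)/2) <= (x0 - b1)/2) by apply Rmin_r.
  assert (Rabs (y - b1) < d) by (unfold y; rewrite Rabs_pos_eq by lra; lra).
  pose proof (Hdd y H) as K. pose proof (Hg y) as K2.
  assert (b1 < y < x0) by (unfold y; lra).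
  specialize (K2 H0). apply Rabs_def2 in K. lra.
Qed.
End Core.

Lemma smooth0 h : smooth h -> forall x, ex_derive h x.
Proof. intros H x. exact (H 0%nat x). Qed.
Lemma smooth1 h : smooth h -> forall x, ex_derive (Derive h) x.
Proof. intros H x. exact (H 1%nat x). Qed.
Lemma smooth2 h : smooth h -> forall x, ex_derive (Derive (Derive h)) x.
Proof. intros H x. exact (H 2%nat x). Qed.

Lemma normH_eq (rho f : R -> R) (a b : R) :
  (forall x, ex_derive rho x) -> (forall x, ex_derive (Derive rho) x) ->
  (forall x, ex_derive f x) -> (forall x, ex_derive (Derive f) x) ->
  rho b <> 0 -> 0 < Derive rho b ^ 2 + rho b ^ 2 * Derive f b ^ 2 ->
  normH rho f a b =
   Rabs (2 * rho b ^ 2 * Derive f b ^ 3 + 3 * Derive rho b ^ 2 * Derive f b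
         - rho b * Derive (Derive rho) b * Derive f b + rho b * Derive rho b * Derive (Derive f) b)
   / ((Derive rho b ^ 2 + rho b ^ 2 * Derive f b ^ 2) * sqrt (Derive rho b ^ 2 + rho b ^ 2 * Derive f b ^ 2)).
Proof.
  intros Hr1 Hr2 Hf1 Hf2 Hr HS.
  unfold normH.
  rewrite (meanH_eq rho f Hr1 Hr2 Hf1 Hf2 a b (rho b) (Derive rho b) (Derive (Derive rho) b)
     (Derive f b) (Derive (Derive f) b)); try reflexivity; try assumption; [|lra].
  assert (Ht : sqrt 2 * sqrt 2 = 2) by (apply sqrt_sqrt; lra).
  assert (H1 : cos (f b + a) ^ 2 + sin (f b + a) ^ 2 = 1) by (pose proof (sin2_cos2 (f b + a)) as E; unfold Rsqr in E; nra).
  assert (H2 : cos (f b - a) ^ 2 + sin (f b - a) ^ 2 = 1) by (pose proof (sin2_cos2 (f b - a)) as E; unfold Rsqr in E; nra).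
  rewrite (dot_combt _ _ _ _ _ _ _ _ _ _ _ _ _ Ht H1 H2).
  set (N := 2 * rho b ^ 2 * Derive f b ^ 3 + 3 * Derive rho b ^ 2 * Derive f b
         - rho b * Derive (Derive rho) b * Derive f b + rho b * Derive rho b * Derive (Derive f) b).
  set (S := Derive rho b ^ 2 + rho b ^ 2 * Derive f b ^ 2) in *.
  assert (Hsq : sqrt S * sqrt S = S) by (apply sqrt_sqrt; lra).
  assert (Hs0 : 0 < sqrt S) by (apply sqrt_lt_R0; lra).
  apply sqrt_lem_1.
  - apply Rplus_le_le_0_compat; [|lra]. repeat apply Rplus_le_le_0_compat; try lra; nra.
  - apply Rmult_le_pos; [apply Rabs_pos| apply Rlt_le, Rinv_0_lt_compat; nra].
  - unfold Rdiv. rewrite Rinv_mult.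
    replace (Rabs N * (/ S * / sqrt S) * (Rabs N * (/ S * / sqrt S))) with
      ((Rabs N * Rabs N) * (/ S * / S) * / (sqrt S * sqrt S)) by (field; lra).
    rewrite Hsq, <- Rabs_mult, Rabs_right by nra.
    unfold S. field. replace (Derive rho b ^ 2 + (rho b * Derive f b) ^ 2) with S by (unfold S; ring). lra.
Qed.

Lemma periodic_derive (g : R -> R) c d :
  (forall x, g (x + c) = g x + d) -> (forall x, ex_derive g x) ->
  forall x, Derive g (x + c) = Derive g x.
Proof.
  intros Hp Hd x.
  assert (E1 : Derive (fun t => g (t + c)) x = Derive g (x + c)).
  { apply is_derive_unique. auto_derive. apply Hd. fixeta; ring. }
  assert (E2 : Derive (fun t => g t + d) x = Derive g x).
  { apply is_derive_unique. auto_derive. apply Hd. fixeta; ring. }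
  rewrite <- E1, <- E2. apply Derive_ext. intro t. apply Hp.
Qed.

Lemma nat_period (h : R -> R) T : (forall x, h (x + T) = h x) ->
  forall (n : nat) x, h (x + INR n * T) = h x.
Proof.
  intros Hp n. induction n as [|n IH]; intro x.
  - simpl. f_equal. ring.
  - rewrite S_INR. replace (x + (INR n + 1) * T) with ((x + INR n * T) + T) by ring.
    rewrite Hp. apply IH.
Qed.

Lemma int_period (h : R -> R) T : (forall x, h (x + T) = h x) ->
  forall (n : Z) x, h (x + IZR n * T) = h x.
Proof.
  intros Hp n x. destruct (Z_le_gt_dec 0 n) as [Hn|Hn].
  - rewrite <- (Z2Nat.id n Hn), <- INR_IZR_INZ. apply nat_period; auto.
  - assert (Hn' : (0 <= - n)%Z) by lia.
    pose proof (nat_period h T Hp (Z.to_nat (- n)) (x + IZR n * T)) as E.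
    rewrite INR_IZR_INZ, Z2Nat.id, opp_IZR in E by lia.
    replace (x + IZR n * T + - IZR n * T) with x in E by ring. auto.
Qed.

Lemma cos_pZ x (n : Z) : cos (x + 2 * IZR n * PI) = cos x.
Proof.
  replace (x + 2 * IZR n * PI) with (x + IZR n * (2 * PI)) by ring.
  apply (int_period cos (2 * PI)). intro y. pose proof (cos_period y 1) as E. simpl INR in E. rewrite <- E. f_equal. ring.
Qed.
Lemma sin_pZ x (n : Z) : sin (x + 2 * IZR n * PI) = sin x.
Proof.
  replace (x + 2 * IZR n * PI) with (x + IZR n * (2 * PI)) by ring.
  apply (int_period sin (2 * PI)). intro y. pose proof (sin_period y 1) as E. simpl INR in E. rewrite <- E. f_equal. ring.
Qed.

Lemma reduce x T : 0 < T -> exists n : Z, 0 <= x - IZR n * T < T.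
Proof.
  intros HT. destruct (archimed (x / T)) as [H1 H2].
  exists (up (x / T) - 1)%Z. rewrite minus_IZR.
  set (u := IZR (up (x / T))) in *.
  assert (x = (x / T) * T) by (field; lra).
  split; nra.
Qed.

Lemma Cmod_polar c t : 0 <= c -> Cmod (c * cos t, c * sin t) = c.
Proof.
  intro Hc. unfold Cmod. simpl. apply sqrt_lem_1; [nra| auto|].
  pose proof (sin2_cos2 t) as E. unfold Rsqr in E. nra.
Qed.

Lemma polar (z : C) c : 0 < c -> Cmod z = c -> exists t, z = (c * cos t, c * sin t).
Proof.
  destruct z as [x y]. unfold Cmod. simpl. intros Hc Hm.
  assert (Hxy : x ^ 2 + y ^ 2 = c * c) by (rewrite <- Hm; rewrite sqrt_sqrt; nra).
  assert (Hb : -1 <= x / c <= 1).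
  { assert (Ex : x = (x / c) * c) by (field; lra).
    assert (Hu : (x / c) * (x / c) * (c * c) <= 1 * (c * c)) by (rewrite Ex in Hxy; nra).
    apply Rmult_le_reg_r in Hu; [|nra]. split; nra. }
  assert (Hs : sqrt (1 - (x / c)²) = Rabs y / c).
  { apply sqrt_lem_1. unfold Rsqr. nra. apply Rmult_le_pos; [apply Rabs_pos| apply Rlt_le, Rinv_0_lt_compat; lra].
    unfold Rsqr. replace (Rabs y / c * (Rabs y / c)) with ((Rabs y * Rabs y) / (c * c)) by (field; lra).
    rewrite <- Rabs_mult, Rabs_right by nra.
    replace (1 - x / c * (x / c)) with ((c * c - x * x) / (c * c)) by (field; lra).
    f_equal. nra. }
  destruct (Rle_or_lt 0 y) as [Hy|Hy].
  - exists (acos (x / c)). rewrite cos_acos, sin_acos, Hs, Rabs_right by lra. f_equal; field; lra.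
  - exists (- acos (x / c)). rewrite cos_neg, sin_neg, cos_acos, sin_acos, Hs, Rabs_left by lra.
    f_equal; field; lra.
Qed.

Lemma angles (f : R -> R) (k : Z) : (forall x, ex_derive f x) -> (forall x, Derive f x <> 0) ->
  (forall x, f (x + 2 * PI) = f x + 2 * IZR k * PI) -> forall t1 t2, exists a b,
  0 <= a < 2 * PI /\ 0 <= b < 2 * PI /\ cos (f b + a) = cos t1 /\ sin (f b + a) = sin t1 /\
  cos (f b - a) = cos t2 /\ sin (f b - a) = sin t2.
Proof.
  intros Hd Hn Hp t1 t2.
  assert (HPI : 0 < PI) by apply PI_RGT_0.
  assert (Hc : continuity f) by (intro x; apply cpt, exd_cont, Hd).
  assert (Hf2 : f (2 * PI) = f 0 + 2 * IZR k * PI) by (rewrite <- Hp; f_equal; ring).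
  assert (Hk : k <> 0%Z).
  { intro Hk0. subst k. destruct (MVT_gen f 0 (2 * PI) (Derive f)) as [c [_ Hm]].
    - intros x _. apply Derive_correct, Hd.
    - intros x _. apply Hc.
    - rewrite Hf2 in Hm. apply (Hn c). simpl in Hm. nra. }
  set (y := (t1 + t2) / 2). set (L := f 0).
  destruct (archimed ((L - y) / PI)) as [A1 A2].
  set (m := (up ((L - y) / PI) - 1)%Z).
  assert (Hm1 : L - PI < y + IZR m * PI <= L).
  { unfold m. rewrite minus_IZR. set (u := IZR (up ((L - y) / PI))) in *.
    assert (E : L - y = (L - y) / PI * PI) by (field; lra). split; nra. }
  assert (Hj : exists (j : Z) b, 0 <= b < 2 * PI /\ f b = y + IZR j * PI).
  { destruct (Z_lt_le_dec 0 k) as [Hk1|Hk1].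
    - assert (IZR k >= 1) by (apply Rle_ge, IZR_le; lia).
      destruct (IVT_gen f 0 (2 * PI) (y + IZR (m + 1) * PI) Hc) as [b [Hb Hfb]].
      + rewrite Hf2, plus_IZR, Rmin_left, Rmax_right by nra. fold L. split; nra.
      + exists (m + 1)%Z, b. rewrite Rmin_left, Rmax_right in Hb by lra. split; [|auto].
        split; [lra|]. destruct Hb as [_ Hb]. destruct (Rle_lt_or_eq_dec _ _ Hb) as [|Hb']; [auto|].
        subst b. rewrite Hf2, plus_IZR in Hfb. fold L in Hfb. nra.
    - assert (IZR k <= -1) by (apply IZR_le; lia).
      destruct (IVT_gen f 0 (2 * PI) (y + IZR m * PI) Hc) as [b [Hb Hfb]].
      + rewrite Hf2, Rmin_right, Rmax_left by nra. fold L. split; nra.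
      + exists m, b. rewrite Rmin_left, Rmax_right in Hb by lra. split; [|auto].
        split; [lra|]. destruct Hb as [_ Hb]. destruct (Rle_lt_or_eq_dec _ _ Hb) as [|Hb']; [auto|].
        subst b. rewrite Hf2 in Hfb. fold L in Hfb. nra. }
  destruct Hj as [j [b [Hb Hfb]]].
  set (a0 := t1 - f b).
  destruct (reduce a0 (2 * PI)) as [n Hn']; [lra|].
  exists (a0 - IZR n * (2 * PI)), b. split; [lra|]. split; [auto|].
  replace (f b + (a0 - IZR n * (2 * PI))) with (t1 + 2 * IZR (- n) * PI) by (rewrite opp_IZR; unfold a0; ring).
  replace (f b - (a0 - IZR n * (2 * PI))) with (t2 + 2 * IZR (j + n) * PI)
    by (rewrite plus_IZR; unfold a0; rewrite Hfb; unfold y; field).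
  rewrite !cos_pZ, !sin_pZ. auto.
Qed.

Lemma reg_SS (rho f : R -> R) : (forall x, ex_derive rho x) -> (forall x, ex_derive f x) ->
  regular_curve rho f -> forall b, 0 < Derive rho b ^ 2 + rho b ^ 2 * Derive f b ^ 2.
Proof.
  intros Hr1 Hf1 Hreg b.
  assert (E1 : Derive (fun t => fst (gamma rho f t)) b = Derive rho b * cos (f b) - rho b * Derive f b * sin (f b)).
  { unfold gamma. simpl. apply is_derive_unique. auto_derive. split; [apply Hr1|split;[apply Hf1|exact I]].
    fixeta. ring. }
  assert (E2 : Derive (fun t => snd (gamma rho f t)) b = Derive rho b * sin (f b) + rho b * Derive f b * cos (f b)).
  { unfold gamma. simpl. apply is_derive_unique. auto_derive. split; [apply Hr1|split;[apply Hf1|exact I]].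
    fixeta. ring. }
  destruct (Rle_lt_or_eq_dec 0 (Derive rho b ^ 2 + rho b ^ 2 * Derive f b ^ 2)) as [|E]; [nra|auto|].
  exfalso. assert (Hp : Derive rho b = 0) by nra. assert (Hw : rho b * Derive f b = 0) by nra.
  destruct (Hreg b) as [H|H]; apply H; [rewrite E1|rewrite E2]; rewrite Hp, Hw; ring.
Qed.

Lemma const_normH (rho f : R -> R) R0 a b :
  (forall x, rho x = R0) -> 0 < R0 ->
  (forall x, ex_derive f x) -> (forall x, ex_derive (Derive f) x) ->
  Derive f b <> 0 -> rho b * normH rho f a b = 2.
Proof.
  intros Hc HR Hf1 Hf2 Hw.
  assert (Hr1 : forall x, ex_derive rho x).
  { intro x. apply (ex_derive_ext (fun _ => R0)); [intro; rewrite Hc; reflexivity| apply ex_derive_const]. }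
  assert (Hd : forall x, Derive rho x = 0).
  { intro x. rewrite (Derive_ext rho (fun _ => R0)) by (intro; apply Hc). apply Derive_const. }
  assert (Hr2 : forall x, ex_derive (Derive rho) x).
  { intro x. apply (ex_derive_ext (fun _ => 0)); [intro; rewrite Hd; reflexivity| apply ex_derive_const]. }
  assert (Hdd : forall x, Derive (Derive rho) x = 0).
  { intro x. rewrite (Derive_ext (Derive rho) (fun _ => 0)) by (intro; apply Hd). apply Derive_const. }
  rewrite normH_eq; auto.
  2:{ rewrite Hc; lra. }
  2:{ rewrite Hd, Hc. assert (0 < Derive f b ^ 2) by (apply pow2_gt_0; auto).
    apply Rplus_le_lt_0_compat; [nra| apply Rmult_lt_0_compat; [apply pow_lt; lra| auto]]. }
  rewrite Hd, Hdd, !Hc. set (w := Derive f b) in *.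
  assert (Hsq : sqrt (0 ^ 2 + R0 ^ 2 * w ^ 2) = R0 * Rabs w).
  { apply sqrt_lem_1. nra. apply Rmult_le_pos; [lra| apply Rabs_pos].
    replace (R0 * Rabs w * (R0 * Rabs w)) with (R0 * R0 * (Rabs w * Rabs w)) by ring.
    rewrite <- Rabs_mult, Rabs_right by nra. ring. }
  rewrite Hsq.
  replace (2 * R0 ^ 2 * w ^ 3 + 3 * 0 ^ 2 * w - R0 * 0 * w + R0 * 0 * Derive (Derive f) b)
    with ((2 * R0 ^ 2 * w) * (w * w)) by ring.
  rewrite Rabs_mult, (Rabs_right (w * w)) by nra.
  rewrite Rabs_mult, (Rabs_right (2 * R0 ^ 2)) by nra.
  replace (w * w) with (Rabs w * Rabs w) by (rewrite <- Rabs_mult; apply Rabs_right; nra).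
  replace (w ^ 2) with (Rabs w * Rabs w) by (rewrite <- Rabs_mult; rewrite Rabs_right; [ring|nra]).
  assert (0 < Rabs w) by (apply Rabs_pos_lt; auto).
  field. split; lra.
Qed.

Lemma back_alg1 r p q w z s : 0 < r -> s * s = p ^ 2 + r ^ 2 * w ^ 2 ->
  r * (2 * r ^ 2 * w ^ 3 + 3 * p ^ 2 * w - r * q * w + r * p * z) = 2 * ((p ^ 2 + r ^ 2 * w ^ 2) * s) ->
  2 * w * (s / r) ^ 2 + (p / r * z - (q * r - p ^ 2) / r ^ 2 * w) = 2 * (s / r) ^ 3.
Proof.
  intros Hr Hs HN.
  replace ((s / r) ^ 2) with ((s * s) / r ^ 2) by (field; lra).
  replace ((s / r) ^ 3) with ((s * s) * s / r ^ 3) by (field; lra).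
  rewrite Hs.
  replace (2 * ((p ^ 2 + r ^ 2 * w ^ 2) * s / r ^ 3)) with
    (r * (2 * r ^ 2 * w ^ 3 + 3 * p ^ 2 * w - r * q * w + r * p * z) / r ^ 3) by (rewrite HN; field; lra).
  field. lra.
Qed.

Lemma back_alg2 r p q w z s : 0 < r -> s * s = p ^ 2 + r ^ 2 * w ^ 2 ->
  r * (2 * r ^ 2 * w ^ 3 + 3 * p ^ 2 * w - r * q * w + r * p * z) = - 2 * ((p ^ 2 + r ^ 2 * w ^ 2) * s) ->
  2 * (- w) * (s / r) ^ 2 + (p / r * (- z) - (q * r - p ^ 2) / r ^ 2 * (- w)) = 2 * (s / r) ^ 3.
Proof.
  intros Hr Hs HN.
  replace ((s / r) ^ 2) with ((s * s) / r ^ 2) by (field; lra).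
  replace ((s / r) ^ 3) with ((s * s) * s / r ^ 3) by (field; lra).
  rewrite Hs.
  replace (2 * ((p ^ 2 + r ^ 2 * w ^ 2) * s / r ^ 3)) with
    (- (r * (2 * r ^ 2 * w ^ 3 + 3 * p ^ 2 * w - r * q * w + r * p * z)) / r ^ 3) by (rewrite HN; field; lra).
  field. lra.
Qed.

Section Back.
Variables (rho f : R -> R) (k : Z).
Hypothesis Hr1 : forall x, ex_derive rho x.
Hypothesis Hr2 : forall x, ex_derive (Derive rho) x.
Hypothesis Hr3 : forall x, ex_derive (Derive (Derive rho)) x.
Hypothesis Hf1 : forall x, ex_derive f x.
Hypothesis Hf2 : forall x, ex_derive (Derive f) x.
Hypothesis Hf3 : forall x, ex_derive (Derive (Derive f)) x.
Hypothesis Hpos : forall x, 0 < rho x.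
Hypothesis HS : forall b, 0 < Derive rho b ^ 2 + rho b ^ 2 * Derive f b ^ 2.

Definition SSf b := Derive rho b ^ 2 + rho b ^ 2 * Derive f b ^ 2.
Definition NNf b := 2 * rho b ^ 2 * Derive f b ^ 3 + 3 * Derive rho b ^ 2 * Derive f b
         - rho b * Derive (Derive rho) b * Derive f b + rho b * Derive rho b * Derive (Derive f) b.
Definition Ef b := rho b * NNf b / (SSf b * sqrt (SSf b)).

Lemma Ef_cont : continuity Ef.
Proof.
  intro x. apply cpt, exd_cont. unfold Ef, NNf, SSf.
  auto_derive.
  replace (Derive rho x * (Derive rho x * 1) + rho x * (rho x * 1) * (Derive f x * (Derive f x * 1)))
    with (Derive rho x ^ 2 + rho x ^ 2 * Derive f x ^ 2) by ring.
  pose proof (HS x) as H0. pose proof (sqrt_lt_R0 _ H0) as H1.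
  repeat split; try exact (Hr1 x); try exact (Hr2 x); try exact (Hr3 x); try exact (Hf2 x); try exact (Hf3 x);
    try exact H0. apply Rgt_not_eq. apply Rmult_lt_0_compat; assumption.
Qed.

Hypothesis Hpr : forall x, rho (x + 2 * PI) = rho x.
Hypothesis Hpf : forall x, f (x + 2 * PI) = f x + 2 * IZR k * PI.
Hypothesis Hcond : forall a b, rho b * normH rho f a b = 2.

Lemma Ef_abs b : Rabs (Ef b) = 2.
Proof.
  rewrite <- (Hcond 0 b), normH_eq; auto; [|apply Rgt_not_eq, Hpos].
  unfold Ef, NNf, SSf. pose proof (HS b) as H0. pose proof (sqrt_lt_R0 _ H0) as H1. pose proof (Hpos b).
  unfold Rdiv. rewrite !Rabs_mult, Rabs_inv, (Rabs_right (rho b)) by lra.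
  rewrite (Rabs_right (_ * sqrt _)) by (apply Rle_ge, Rmult_le_pos; lra). ring.
Qed.

Lemma Ef_const : (forall b, Ef b = 2) \/ (forall b, Ef b = - 2).
Proof.
  assert (Hv : forall b, Ef b = 2 \/ Ef b = - 2).
  { intro b. pose proof (Ef_abs b) as H. destruct (Rcase_abs (Ef b)).
    - rewrite Rabs_left in H by lra. right; lra.
    - rewrite Rabs_right in H by lra. left; lra. }
  assert (Hno : forall b1 b2, Ef b1 = 2 -> Ef b2 = - 2 -> False).
  { intros b1 b2 H1 H2. destruct (IVT_gen Ef b1 b2 0 Ef_cont) as [x [_ Hx]].
    - rewrite H1, H2, Rmin_right, Rmax_left by lra. lra.
    - pose proof (Ef_abs x) as H. rewrite Hx, Rabs_R0 in H. lra. }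
  destruct (Hv 0) as [H|H]; [left|right]; intro b; destruct (Hv b) as [H'|H']; auto;
    exfalso; [apply (Hno 0 b)| apply (Hno b 0)]; auto.
Qed.

Lemma rho_const : forall x, Derive rho x = 0.
Proof.
  assert (PU : forall x, Derive rho (x + 2 * PI) / rho (x + 2 * PI) = Derive rho x / rho x).
  { intro x. rewrite Hpr, (periodic_derive rho (2 * PI) 0); auto. intro y; rewrite Hpr; ring. }
  assert (PV : forall x, Derive f (x + 2 * PI) = Derive f x).
  { intro x. apply (periodic_derive f (2 * PI) (2 * IZR k * PI)); auto. }
  assert (HU : forall x, is_derive (fun x => Derive rho x / rho x) x
      ((Derive (Derive rho) x * rho x - Derive rho x ^ 2) / rho x ^ 2)).
  { intro x. pose proof (Hpos x). auto_derive.
    - repeat split; try exact (Hr1 x); try exact (Hr2 x). lra.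
    - fixeta. field. lra. }
  assert (Hsq : forall x, sqrt ((Derive rho x / rho x) ^ 2 + Derive f x ^ 2) = sqrt (SSf x) / rho x).
  { intro x. pose proof (Hpos x). pose proof (HS x). pose proof (sqrt_lt_R0 _ H0).
    apply sqrt_lem_1. apply Rplus_le_le_0_compat; apply pow2_ge_0. apply Rlt_le, Rdiv_lt_0_compat; unfold SSf; lra.
    replace (sqrt (SSf x) / rho x * (sqrt (SSf x) / rho x)) with ((sqrt (SSf x) * sqrt (SSf x)) / rho x ^ 2) by (field; lra).
    rewrite sqrt_sqrt by (unfold SSf; lra). unfold SSf. field. lra. }
  assert (HP : forall x, 0 < (Derive rho x / rho x) ^ 2 + Derive f x ^ 2).
  { intro x. pose proof (Hpos x). pose proof (HS x).
    replace ((Derive rho x / rho x) ^ 2 + Derive f x ^ 2) with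
      ((Derive rho x ^ 2 + rho x ^ 2 * Derive f x ^ 2) / rho x ^ 2) by (field; lra).
    apply Rdiv_lt_0_compat; nra. }
  assert (HN : forall x, rho x * NNf x = Ef x * (SSf x * sqrt (SSf x))).
  { intro x. pose proof (HS x) as H. fold (SSf x) in H. pose proof (sqrt_lt_R0 _ H). unfold Ef. field. split; lra. }
  assert (Hss : forall x, sqrt (SSf x) * sqrt (SSf x) = Derive rho x ^ 2 + rho x ^ 2 * Derive f x ^ 2).
  { intro x. apply sqrt_sqrt. pose proof (HS x). lra. }
  assert (Z : forall x, Derive rho x / rho x = 0).
  { destruct Ef_const as [HE|HE].
    - apply (core_zero (fun x => Derive rho x / rho x) (Derive f)
        (fun x => (Derive (Derive rho) x * rho x - Derive rho x ^ 2) / rho x ^ 2) (Derive (Derive f))); auto.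
      + intro x. apply Derive_correct, Hf2.
      + intro x. rewrite Hsq. apply back_alg1; auto.
        change (rho x * NNf x = 2 * (SSf x * sqrt (SSf x))). rewrite (HN x), HE. ring.
    - apply (core_zero (fun x => Derive rho x / rho x) (fun x => - Derive f x)
        (fun x => (Derive (Derive rho) x * rho x - Derive rho x ^ 2) / rho x ^ 2) (fun x => - Derive (Derive f) x)); auto.
      + intro x. apply (is_derive_opp (Derive f)). apply Derive_correct, Hf2.
      + intro x. replace ((- Derive f x) ^ 2) with (Derive f x ^ 2) by ring. apply HP.
      + intro x. replace ((- Derive f x) ^ 2) with (Derive f x ^ 2) by ring. rewrite Hsq. apply back_alg2; auto.
        change (rho x * NNf x = - 2 * (SSf x * sqrt (SSf x))). rewrite (HN x), HE. ring.
      + intro x. simpl. rewrite PV. reflexivity. }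
  intro x. pose proof (Z x) as H. pose proof (Hpos x).
  apply (Rmult_eq_reg_r (/ rho x)); [| apply Rinv_neq_0_compat; lra]. rewrite Rmult_0_l. exact H.
Qed.
End Back.

Theorem mainTheorem7 (rho f : R -> R) (k : Z) :
  smooth rho -> smooth f ->
  (forall b, 0 < rho b) ->
  (forall b, rho (b + 2 * PI) = rho b) ->
  (forall b, f (b + 2 * PI) = f b + 2 * IZR k * PI) ->
  regular_curve rho f ->
  simple_curve rho f ->
  ((exists r1 r2 : R, 0 < r1 /\ 0 < r2 /\
      forall p : C * C, L_gamma rho f p <-> product_torus r1 r2 p)
   <-> (forall a b : R, rho b * normH rho f a b = 2)).
Proof.
  intros Hsr Hsf Hpos Hpr Hpf Hreg _.
  pose proof (smooth0 _ Hsr) as Hr1. pose proof (smooth1 _ Hsr) as Hr2. pose proof (smooth2 _ Hsr) as Hr3.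
  pose proof (smooth0 _ Hsf) as Hf1. pose proof (smooth1 _ Hsf) as Hf2. pose proof (smooth2 _ Hsf) as Hf3.
  pose proof (reg_SS rho f Hr1 Hf1 Hreg) as HS.
  assert (Hs2 : 0 < sqrt 2) by (apply sqrt_lt_R0; lra).
  assert (Hw : forall R0, (forall x, rho x = R0) -> forall x, Derive f x <> 0).
  { intros R0 Hc x Hx. pose proof (HS x) as H.
    rewrite (Derive_ext rho (fun _ => R0)), Derive_const, Hx in H by (intro; apply Hc). lra. }
  split.
  - intros [r1 [r2 [H1 [H2 Heq]]]].
    assert (Hb : forall b, 0 <= b < 2 * PI -> rho b = sqrt 2 * r1).
    { intros b Hb. assert (HL : L_gamma rho f (Fpt rho f 0 b)) by (exists 0, b; pose proof PI_RGT_0; repeat split; lra).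
      apply Heq in HL. destruct HL as [HL _]. unfold S1, Fpt in HL. simpl in HL.
      rewrite Cmod_polar in HL by (pose proof (Hpos b); apply Rlt_le, Rdiv_lt_0_compat; lra).
      rewrite <- HL. field. lra. }
    assert (Hc : forall x, rho x = sqrt 2 * r1).
    { intro x. destruct (reduce x (2 * PI)) as [n Hn]; [pose proof PI_RGT_0; lra|].
      transitivity (rho (x - IZR n * (2 * PI))); [|apply Hb; lra].
      rewrite <- (int_period rho (2 * PI) Hpr n (x - IZR n * (2 * PI))). f_equal. ring. }
    intros a b. apply (const_normH rho f (sqrt 2 * r1)); auto.
    apply Rmult_lt_0_compat; lra. apply (Hw _ Hc).
  - intro Hcond.
    pose proof (rho_const rho f k Hr1 Hr2 Hr3 Hf1 Hf2 Hf3 Hpos HS Hpr Hpf Hcond) as Hd.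
    assert (Hc : forall x, rho x = rho 0).
    { intro x. destruct (MVT_gen rho 0 x (Derive rho)) as [c [_ Hm]].
      - intros y _. apply Derive_correct, Hr1.
      - intros y _. apply cpt, exd_cont, Hr1.
      - rewrite Hd in Hm. lra. }
    set (R0 := rho 0) in *. pose proof (Hpos 0) as HR0. fold R0 in HR0.
    set (c := R0 / sqrt 2).
    assert (Hcpos : 0 < c) by (unfold c; apply Rdiv_lt_0_compat; lra).
    exists c, c. split; [auto|]. split; [auto|]. intros [z1 z2]. split.
    + intros [a [b [_ [_ Hp]]]]. unfold Fpt in Hp. rewrite Hc in Hp. fold c in Hp.
      injection Hp as -> ->. unfold product_torus, S1. simpl. split; apply Cmod_polar; lra.
    + intros [Hz1 Hz2]. unfold S1 in Hz1, Hz2. simpl in Hz1, Hz2.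
      destruct (polar z1 c Hcpos Hz1) as [t1 ->]. destruct (polar z2 c Hcpos Hz2) as [t2 ->].
      destruct (angles f k Hf1 (Hw R0 Hc) Hpf t1 t2) as [a [b [Ha [Hb [E1 [E2 [E3 E4]]]]]]].
      exists a, b. split; [auto|]. split; [auto|].
      unfold Fpt. rewrite Hc. fold c. rewrite E1, E2, E3, E4. reflexivity.
Qed.
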